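(* Let $\mathbf{u}$ be a $C^1$ unit vector field on $\mathbb{R}^2$ whose integral curves are straight lines, i.e. $\mathbf{u}(\mathbf{x}+t\mathbf{u}(\mathbf{x}))=\mathbf{u}(\mathbf{x})$ for all $\mathbf{x}$ and $t\ge0$. Let $\mathbf{f}\in C^2_c(S^1;\mathbb{D})$. Then: (i) $\mathcal{L}_0\mathbf{f}=0$ if and only if $\mathbf{f}=\varphi\,\mathbf{u}^\perp$ for some $\varphi\in C_c^2(\mathbb{D})$; (ii) $\mathcal{T}_0\mathbf{f}=0$ if and only if $\mathbf{f}=\varphi\,\mathbf{u}$ for some $\varphi\in C_c^2(\mathbb{D})$.
   Context: $\mathbb{D}$ is the open unit disc in $\mathbb{R}^2$; $C_c^2(S^1;\mathbb{D})$ is the space of twice continuously differentiable vector fields $\mathbb{R}^2\to\mathbb{R}^2$ with compact support in $\mathbb{D}$, and $C_c^2(\mathbb{D})$ the analogous scalar space. For $\mathbf{a}=(a_1,a_2)$, $\mathbf{a}^\perp=(-a_2,a_1)$. The longitudinal and transverse divergent beam transforms are $\mathcal{L}_0\mathbf{f}(\mathbf{x})=-\int_0^\infty \mathbf{u}(\mathbf{x})\cdot\mathbf{f}(\mathbf{x}+t\mathbf{u}(\mathbf{x}))\,dt$ and $\mathcal{T}_0\mathbf{f}(\mathbf{x})=-\int_0^\infty \mathbf{u}^\perp(\mathbf{x})\cdot\mathbf{f}(\mathbf{x}+t\mathbf{u}(\mathbf{x}))\,dt$. *)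

(* Defs.v *)
From Stdlib Require Import Reals.
From Coquelicot Require Import Coquelicot.
Open Scope R_scope.

Definition vec2 := (R * R)%type.

Definition vadd (a b : vec2) : vec2 := (fst a + fst b, snd a + snd b).
Definition vscal (t : R) (a : vec2) : vec2 := (t * fst a, t * snd a).
Definition vdot (a b : vec2) : R := fst a * fst b + snd a * snd b.
Definition vperp (a : vec2) : vec2 := (- snd a, fst a).
Definition vnorm (a : vec2) : R := sqrt (vdot a a).

Definition d1 (g : vec2 -> R) (p : vec2) : R := Derive (fun s => g (s, snd p)) (fst p).
Definition d2 (g : vec2 -> R) (p : vec2) : R := Derive (fun s => g (fst p, s)) (snd p).

Definition C1 (g : vec2 -> R) : Prop :=
  (forall p : vec2, ex_derive (fun s => g (s, snd p)) (fst p) /\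
                    ex_derive (fun s => g (fst p, s)) (snd p)) /\
  (forall p : vec2, continuous g p /\ continuous (d1 g) p /\ continuous (d2 g) p).

Definition C2 (g : vec2 -> R) : Prop := C1 g /\ C1 (d1 g) /\ C1 (d2 g).

Definition C1v (v : vec2 -> vec2) : Prop := C1 (fun p => fst (v p)) /\ C1 (fun p => snd (v p)).
Definition C2v (v : vec2 -> vec2) : Prop := C2 (fun p => fst (v p)) /\ C2 (fun p => snd (v p)).

(* Compact support in the open unit disc D: the (closed) support is a compact
   subset of D, i.e. it is contained in a closed disc of radius r < 1. *)
Definition supp_in_D {T : Type} (zero : T) (g : vec2 -> T) : Prop :=
  exists r : R, r < 1 /\ forall p : vec2, r < vnorm p -> g p = zero.

Definition Cc2_D (phi : vec2 -> R) : Prop := C2 phi /\ supp_in_D 0 phi.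
Definition Cc2v_D (f : vec2 -> vec2) : Prop := C2v f /\ supp_in_D (0, 0) f.

Definition int_0_infty (h : R -> R) : R :=
  RInt_gen h (at_point 0) (Rbar_locally p_infty).

Definition L0 (u f : vec2 -> vec2) (x : vec2) : R :=
  - int_0_infty (fun t => vdot (u x) (f (vadd x (vscal t (u x))))).
Definition T0 (u f : vec2 -> vec2) (x : vec2) : R :=
  - int_0_infty (fun t => vdot (vperp (u x)) (f (vadd x (vscal t (u x))))).

(* Main.v *)
Require Import Defs.
From Stdlib Require Import Reals.
From Coquelicot Require Import Coquelicot.
Open Scope R_scope.
From Stdlib Require Import Lra Psatz Classical FunctionalExtensionality.
Import Defs.

Lemma ball_R (x y : R) (e : R) : ball x e y <-> Rabs (y - x) < e.
Proof. unfold ball; simpl; unfold AbsRing_ball, abs, minus, plus, opp; simpl. tauto. Qed.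

Ltac unball := unfold ball; simpl; unfold AbsRing_ball, abs, minus, plus, opp; simpl.

Lemma unit_sq (a : vec2) : vnorm a = 1 -> fst a * fst a + snd a * snd a = 1.
Proof.
  unfold vnorm, vdot. intro H.
  assert (H0 : 0 <= fst a * fst a + snd a * snd a) by nra.
  rewrite <- (sqrt_sqrt _ H0), H. ring.
Qed.

Lemma abs_le1 (a1 a2 : R) : a1 * a1 + a2 * a2 = 1 -> Rabs a1 <= 1 /\ Rabs a2 <= 1.
Proof.
  intro H; split; unfold Rabs; destruct (Rcase_abs _); nra.
Qed.

Lemma cont_pt_of (g : R -> R) x : continuous g x -> continuity_pt g x.
Proof. intro H; apply continuity_pt_filterlim; exact H. Qed.

Lemma lip_scalar (g : vec2 -> R) : C1 g -> forall p : vec2,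
  exists d M, 0 < d /\ 0 <= M /\ forall x y : vec2,
    Rabs (fst x - fst p) < d -> Rabs (snd x - snd p) < d ->
    Rabs (fst y - fst p) < d -> Rabs (snd y - snd p) < d ->
    Rabs (g x - g y) <= M * (Rabs (fst x - fst y) + Rabs (snd x - snd y)).
Proof.
  intros [Hd Hc] p.
  destruct (Hc p) as [_ [C1' C2']].
  assert (L1 := proj1 (filterlim_locally _ _) C1' (mkposreal 1 Rlt_0_1)).
  assert (L2 := proj1 (filterlim_locally _ _) C2' (mkposreal 1 Rlt_0_1)).
  destruct L1 as [e1 He1]. destruct L2 as [e2 He2].
  set (M := Rabs (d1 g p) + Rabs (d2 g p) + 1).
  exists (Rmin e1 e2), M.
  assert (Hmin1 := Rmin_l e1 e2). assert (Hmin2 := Rmin_r e1 e2).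
  assert (He1p := cond_pos e1). assert (He2p := cond_pos e2).
  split. apply Rmin_pos; auto.
  split. unfold M. assert (0 <= Rabs (d1 g p)) by apply Rabs_pos. assert (0 <= Rabs (d2 g p)) by apply Rabs_pos. lra.
  assert (B1 : forall z : vec2, Rabs (fst z - fst p) < Rmin e1 e2 -> Rabs (snd z - snd p) < Rmin e1 e2 -> Rabs (d1 g z) <= M).
  { intros z Hz1 Hz2. assert (H := He1 z). simpl in H.
    assert (H' : ball (d1 g p) 1 (d1 g z)). apply H. split; unball; unfold Rminus in *; lra.
    unfold ball in H'; simpl in H'; unfold AbsRing_ball, abs, minus, plus, opp in H'; simpl in H'. unfold M.
    assert (Rabs (d1 g z) <= Rabs (d1 g z - d1 g p) + Rabs (d1 g p)).
    { replace (d1 g z) with ((d1 g z - d1 g p) + d1 g p) at 1 by ring. apply Rabs_triang. }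
    assert (0 <= Rabs (d2 g p)) by apply Rabs_pos. simpl in H'. unfold Rminus in *. lra. }
  assert (B2 : forall z : vec2, Rabs (fst z - fst p) < Rmin e1 e2 -> Rabs (snd z - snd p) < Rmin e1 e2 -> Rabs (d2 g z) <= M).
  { intros z Hz1 Hz2. assert (H := He2 z). simpl in H.
    assert (H' : ball (d2 g p) 1 (d2 g z)). apply H. split; unball; unfold Rminus in *; lra.
    unfold ball in H'; simpl in H'; unfold AbsRing_ball, abs, minus, plus, opp in H'; simpl in H'. unfold M.
    assert (Rabs (d2 g z) <= Rabs (d2 g z - d2 g p) + Rabs (d2 g p)).
    { replace (d2 g z) with ((d2 g z - d2 g p) + d2 g p) at 1 by ring. apply Rabs_triang. }
    assert (0 <= Rabs (d1 g p)) by apply Rabs_pos. simpl in H'. unfold Rminus in *. lra. }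
  set (d := Rmin e1 e2) in *.
  intros [x1 x2] [y1 y2]; simpl; intros Hx1 Hx2 Hy1 Hy2.
  assert (S1 : Rabs (g (x1, x2) - g (y1, x2)) <= M * Rabs (x1 - y1)).
  { destruct (MVT_gen (fun s => g (s, x2)) y1 x1 (fun s => d1 g (s, x2))) as [c [Hc1 Hc2]].
    - intros s _. destruct (Hd (s, x2)) as [E _]. simpl in E.
      apply Derive_correct; exact E.
    - intros s _. destruct (Hd (s, x2)) as [E _]. simpl in E.
      apply cont_pt_of. apply (@ex_derive_continuous R_AbsRing R_NormedModule); exact E.
    - simpl in Hc2. rewrite Hc2, Rabs_mult.
      apply Rmult_le_compat_r. apply Rabs_pos.
      apply B1; simpl; try lra.
      revert Hc1; unfold Rmin, Rmax; destruct (Rle_dec y1 x1); intros Hc1;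
      apply Rabs_def2 in Hx1; apply Rabs_def2 in Hy1; apply Rabs_def1; lra. }
  assert (S2 : Rabs (g (y1, x2) - g (y1, y2)) <= M * Rabs (x2 - y2)).
  { destruct (MVT_gen (fun s => g (y1, s)) y2 x2 (fun s => d2 g (y1, s))) as [c [Hc1 Hc2]].
    - intros s _. destruct (Hd (y1, s)) as [_ E]. simpl in E.
      apply Derive_correct; exact E.
    - intros s _. destruct (Hd (y1, s)) as [_ E]. simpl in E.
      apply cont_pt_of. apply (@ex_derive_continuous R_AbsRing R_NormedModule); exact E.
    - simpl in Hc2. rewrite Hc2, Rabs_mult.
      apply Rmult_le_compat_r. apply Rabs_pos.
      apply B2; simpl; try lra.
      revert Hc1; unfold Rmin, Rmax; destruct (Rle_dec y2 x2); intros Hc1;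
      apply Rabs_def2 in Hx2; apply Rabs_def2 in Hy2; apply Rabs_def1; lra. }
  replace (g (x1, x2) - g (y1, y2)) with ((g (x1, x2) - g (y1, x2)) + (g (y1, x2) - g (y1, y2))) by ring.
  eapply Rle_trans. apply Rabs_triang. lra.
Qed.


Lemma lip_vec (u : vec2 -> vec2) : C1v u -> forall p : vec2,
  exists d M, 0 < d /\ 0 <= M /\ forall x y : vec2,
    Rabs (fst x - fst p) < d -> Rabs (snd x - snd p) < d ->
    Rabs (fst y - fst p) < d -> Rabs (snd y - snd p) < d ->
    Rabs (fst (u x) - fst (u y)) <= M * (Rabs (fst x - fst y) + Rabs (snd x - snd y)) /\
    Rabs (snd (u x) - snd (u y)) <= M * (Rabs (fst x - fst y) + Rabs (snd x - snd y)).
Proof.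
  intros [H1 H2] p.
  destruct (lip_scalar _ H1 p) as [da [Ma [Hda [HMa La]]]].
  destruct (lip_scalar _ H2 p) as [db [Mb [Hdb [HMb Lb]]]].
  exists (Rmin da db), (Ma + Mb).
  assert (Rmin da db <= da) by apply Rmin_l. assert (Rmin da db <= db) by apply Rmin_r.
  split. apply Rmin_pos; auto. split. lra.
  intros x y ? ? ? ?.
  assert (0 <= Rabs (fst x - fst y) + Rabs (snd x - snd y)) by (assert (0 <= Rabs (fst x - fst y)) by apply Rabs_pos; assert (0 <= Rabs (snd x - snd y)) by apply Rabs_pos; lra).
  split.
  - eapply Rle_trans. apply La; lra. nra.
  - eapply Rle_trans. apply Lb; lra. nra.
Qed.

Lemma bprod (x y h : R) : Rabs x <= h -> Rabs y <= 1 -> Rabs (x * y) <= h.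
Proof. intros. rewrite Rabs_mult. assert (0 <= Rabs x) by apply Rabs_pos. assert (0 <= Rabs y) by apply Rabs_pos. nra. Qed.


Lemma ucomp (u : vec2 -> vec2) (hu_C1 : C1v u) (hu_unit : forall x : vec2, vnorm (u x) = 1) (hu_lines : forall (x : vec2) (t : R), 0 <= t -> u (vadd x (vscal t (u x))) = u x) x : Rabs (fst (u x)) <= 1 /\ Rabs (snd (u x)) <= 1.
Proof. apply abs_le1, unit_sq, hu_unit. Qed.

Lemma backline (u : vec2 -> vec2) (hu_C1 : C1v u) (hu_unit : forall x : vec2, vnorm (u x) = 1) (hu_lines : forall (x : vec2) (t : R), 0 <= t -> u (vadd x (vscal t (u x))) = u x) (x0 : vec2) (s : R) : 0 <= s -> u (vadd x0 (vscal (- s) (u x0))) = u x0.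
Proof.
  set (a := u x0).
  set (P := fun t => vadd x0 (vscal (- t) a)).
  change (0 <= s -> u (P s) = a).
  intro Hs. apply NNPP; intro Hne.
  set (E := fun t => 0 <= t /\ forall t', 0 <= t' <= t -> u (P t') = a).
  assert (HP0 : P 0 = x0). { unfold P, vadd, vscal. destruct x0; simpl; f_equal; ring. }
  assert (HE0 : E 0). { split. lra. intros t' Ht'. replace t' with 0 by lra. rewrite HP0. reflexivity. }
  assert (Hb : bound E). { exists s. intros t [Ht Ht']. destruct (Rle_lt_dec t s) as [|Hlt]; auto.
     exfalso. apply Hne. apply Ht'. lra. }
  destruct (completeness E Hb (ex_intro _ 0 HE0)) as [m [Hub Hlub]].
  assert (Hm0 : 0 <= m) by (apply Hub; exact HE0).
  destruct (lip_vec u hu_C1 (P m)) as [d [M [Hd [HM L]]]].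
  set (h := Rmin (d / 4) (/ (4 * (M + 1)))).
  assert (Hh1 : h <= d / 4) by apply Rmin_l.
  assert (Hh2 : h <= / (4 * (M + 1))) by apply Rmin_r.
  assert (Hhp : 0 < h). { apply Rmin_pos. lra. apply Rinv_0_lt_compat. lra. }
  assert (HMh : 4 * (M + 1) * h <= 1).
  { assert (T : 4 * (M + 1) * h <= 4 * (M + 1) * / (4 * (M + 1))) by (apply Rmult_le_compat_l; lra).
    rewrite Rinv_r in T; lra. }
  assert (Hs0 : exists s0, E s0 /\ m - h < s0).
  { apply NNPP; intro Hn. assert (m <= m - h). apply Hlub. intros t Et.
    destruct (Rle_lt_dec t (m - h)) as [|Hlt]; auto. exfalso; apply Hn; exists t; auto. lra. }
  destruct Hs0 as [s0 [[Hs00 Es0] Hs0m]].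
  assert (Hs0le : s0 <= m) by (apply Hub; split; auto).
  assert (Ha := ucomp u hu_C1 hu_unit hu_lines x0). fold a in Ha. destruct Ha as [Ha1 Ha2].
  assert (HEn : E (s0 + h)).
  { split. lra. intros t' Ht'.
    destruct (Rle_lt_dec t' s0) as [Hle|Hlt]. apply Es0; lra.
    set (h' := t' - s0).
    set (p' := P t').
    set (c := u p').
    assert (Hc := ucomp u hu_C1 hu_unit hu_lines p'). fold c in Hc. destruct Hc as [Hc1 Hc2].
    assert (Hq := hu_lines p' h' ltac:(unfold h'; lra)). fold c in Hq.
    set (q := vadd p' (vscal h' c)) in Hq.
    assert (Hp : u (P s0) = a) by (apply Es0; lra).
    destruct (L q (P s0)) as [L1 L2].
    - unfold q, p', P, vadd, vscal; simpl.
      replace (fst x0 + - t' * fst a + h' * fst c - (fst x0 + - m * fst a)) with ((m - t') * fst a + h' * fst c) by ring.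
      eapply Rle_lt_trans. apply Rabs_triang.
      assert (Rabs ((m - t') * fst a) <= h). apply bprod; auto. apply Rabs_le; split; lra.
      assert (Rabs (h' * fst c) <= h). apply bprod; auto. apply Rabs_le; unfold h'; split; lra.
      lra.
    - unfold q, p', P, vadd, vscal; simpl.
      replace (snd x0 + - t' * snd a + h' * snd c - (snd x0 + - m * snd a)) with ((m - t') * snd a + h' * snd c) by ring.
      eapply Rle_lt_trans. apply Rabs_triang.
      assert (Rabs ((m - t') * snd a) <= h). apply bprod; auto. apply Rabs_le; split; lra.
      assert (Rabs (h' * snd c) <= h). apply bprod; auto. apply Rabs_le; unfold h'; split; lra.
      lra.
    - unfold P, vadd, vscal; simpl.
      replace (fst x0 + - s0 * fst a - (fst x0 + - m * fst a)) with ((m - s0) * fst a) by ring.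
      eapply Rle_lt_trans. apply bprod; auto. apply Rabs_le. split; [|apply Rle_refl]. lra. lra.
    - unfold P, vadd, vscal; simpl.
      replace (snd x0 + - s0 * snd a - (snd x0 + - m * snd a)) with ((m - s0) * snd a) by ring.
      eapply Rle_lt_trans. apply bprod; auto. apply Rabs_le. split; [|apply Rle_refl]. lra. lra.
    - rewrite Hq, Hp in L1, L2.
      assert (E1 : fst q - fst (P s0) = h' * (fst c - fst a)).
      { unfold q, p', P, h', vadd, vscal; simpl. ring. }
      assert (E2 : snd q - snd (P s0) = h' * (snd c - snd a)).
      { unfold q, p', P, h', vadd, vscal; simpl. ring. }
      rewrite E1, E2, !Rabs_mult, (Rabs_pos_eq h') in L1, L2 by (unfold h'; lra).
      set (D := Rabs (fst c - fst a) + Rabs (snd c - snd a)) in *.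
      assert (0 <= Rabs (fst c - fst a)) by apply Rabs_pos.
      assert (0 <= Rabs (snd c - snd a)) by apply Rabs_pos.
      assert (Hh'h : h' <= h) by (unfold h'; lra).
      assert (HD : D <= 2 * M * h' * D) by (unfold D in *; nra).
      assert (HMh' : M * h' <= 1/4) by nra.
      assert (HD0 : D <= 0) by (unfold D in *; nra).
      assert (Rabs (fst c - fst a) = 0) by (unfold D in HD0; apply Rle_antisym; lra).
      assert (Rabs (snd c - snd a) = 0) by (unfold D in HD0; apply Rle_antisym; lra).
      assert (fst c = fst a). { destruct (Req_dec (fst c) (fst a)) as [|Hn]; auto. exfalso. apply Rabs_no_R0 in H1; auto. lra. }
      assert (snd c = snd a). { destruct (Req_dec (snd c) (snd a)) as [|Hn]; auto. exfalso. apply Rabs_no_R0 in H2; auto. lra. }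
      change (c = a). apply injective_projections; auto. }
  assert (s0 + h <= m) by (apply Hub; exact HEn). lra.
Qed.


Lemma fullline (u : vec2 -> vec2) (hu_C1 : C1v u) (hu_unit : forall x : vec2, vnorm (u x) = 1) (hu_lines : forall (x : vec2) (t : R), 0 <= t -> u (vadd x (vscal t (u x))) = u x) (x : vec2) (t : R) : u (vadd x (vscal t (u x))) = u x.
Proof.
  destruct (Rle_lt_dec 0 t). apply hu_lines; auto.
  replace t with (- (- t)) by ring. apply (backline u hu_C1 hu_unit hu_lines). lra.
Qed.

Lemma cross0 (u : vec2 -> vec2) (hu_C1 : C1v u) (hu_unit : forall x : vec2, vnorm (u x) = 1) (hu_lines : forall (x : vec2) (t : R), 0 <= t -> u (vadd x (vscal t (u x))) = u x) (x y : vec2) : fst (u x) * snd (u y) - snd (u x) * fst (u y) = 0.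
Proof.
  apply NNPP; intro Hcr.
  set (a := u x) in *. set (b := u y) in *.
  set (cr := fst a * snd b - snd a * fst b) in *.
  set (e1 := fst y - fst x). set (e2 := snd y - snd x).
  set (t := (e1 * snd b - fst b * e2) / cr).
  set (s := (snd a * e1 - fst a * e2) / cr).
  assert (Heq : vadd x (vscal t a) = vadd y (vscal s b)).
  { unfold vadd, vscal, t, s, e1, e2, cr in *; simpl. apply injective_projections; simpl; field; auto. }
  assert (Ha := fullline u hu_C1 hu_unit hu_lines x t). assert (Hb := fullline u hu_C1 hu_unit hu_lines y s). fold a in Ha. fold b in Hb.
  rewrite Heq, Hb in Ha. apply Hcr. unfold cr. rewrite Ha. ring.
Qed.

Lemma cont_line (g : vec2 -> R) (Hg : forall p, continuous g p) (x d : vec2) (l : R) :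
  continuous (fun t => g (fst x + t * fst d, snd x + t * snd d)) l.
Proof.
  apply (continuous_comp_2 (fun t => fst x + t * fst d) (fun t => snd x + t * snd d) (fun p q => g (p, q))).
  - apply (@ex_derive_continuous R_AbsRing R_NormedModule). auto_derive. auto.
  - apply (@ex_derive_continuous R_AbsRing R_NormedModule). auto_derive. auto.
  - eapply continuous_ext. 2: apply Hg. intros [p q]. reflexivity.
Qed.

Lemma uconst (u : vec2 -> vec2) (hu_C1 : C1v u) (hu_unit : forall x : vec2, vnorm (u x) = 1) (hu_lines : forall (x : vec2) (t : R), 0 <= t -> u (vadd x (vscal t (u x))) = u x) (x y : vec2) : u y = u x.
Proof.
  pose proof hu_C1 as hC. destruct hC as [[_ C1a] [_ C1b]].
  set (a := u x).
  set (z := fun l => (fst x + l * fst (vadd y (vscal (-1) x)), snd x + l * snd (vadd y (vscal (-1) x)))).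
  set (g := fun l => fst a * fst (u (z l)) + snd a * snd (u (z l))).
  assert (Hg2 : forall l, g l * g l = 1).
  { intro l. unfold g. assert (H := cross0 u hu_C1 hu_unit hu_lines x (z l)). fold a in H.
    assert (Ha := unit_sq _ (hu_unit x)). assert (Hb := unit_sq _ (hu_unit (z l))). fold a in Ha. nra. }
  assert (Cu1 : forall l, continuity_pt (fun l => fst (u (z l))) l).
  { intro l; apply cont_pt_of; unfold z; apply (cont_line (fun p => fst (u p))); intro p; apply C1a. }
  assert (Cu2 : forall l, continuity_pt (fun l => snd (u (z l))) l).
  { intro l; apply cont_pt_of; unfold z; apply (cont_line (fun p => snd (u p))); intro p; apply C1b. }
  assert (Hc : continuity g).
  { intro l. unfold g.
    apply (continuity_pt_plus (fun l => fst a * fst (u (z l))) (fun l => snd a * snd (u (z l)))).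
    apply (continuity_pt_mult (fun _ => fst a) (fun l => fst (u (z l)))); auto. apply continuity_pt_const; intros ? ?; reflexivity.
    apply (continuity_pt_mult (fun _ => snd a) (fun l => snd (u (z l)))); auto. apply continuity_pt_const; intros ? ?; reflexivity. }
  assert (Hz0 : z 0 = x). { unfold z; apply injective_projections; simpl; ring. }
  assert (Hz1 : z 1 = y). { unfold z, vadd, vscal; apply injective_projections; simpl; ring. }
  assert (Hg0 : g 0 = 1). { unfold g. rewrite Hz0. fold a. apply unit_sq, hu_unit. }
  destruct (Rle_lt_dec 0 (g 1)) as [Hp|Hn].
  - assert (H1 : g 1 = 1). { assert (H := Hg2 1). apply Rle_antisym; nra. }
    unfold g in H1. rewrite Hz1 in H1.
    assert (Ha := unit_sq _ (hu_unit x)). assert (Hb := unit_sq _ (hu_unit y)). fold a in Ha.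
    assert (S : (fst (u y) - fst a)*(fst (u y) - fst a) + (snd (u y) - snd a)*(snd (u y) - snd a) = 0).
    { replace ((fst (u y) - fst a)*(fst (u y) - fst a) + (snd (u y) - snd a)*(snd (u y) - snd a)) with
        ((fst (u y) * fst (u y) + snd (u y) * snd (u y)) + (fst a * fst a + snd a * snd a) - 2 * (fst a * fst (u y) + snd a * snd (u y))) by ring.
      rewrite Hb, Ha, H1. ring. }
    assert (E1 : fst (u y) = fst a) by (apply Rminus_diag_uniq, Rsqr_0_uniq; unfold Rsqr; apply Rle_antisym; nra).
    assert (E2 : snd (u y) = snd a) by (apply Rminus_diag_uniq, Rsqr_0_uniq; unfold Rsqr; apply Rle_antisym; nra).
    apply injective_projections; auto.
  - exfalso. destruct (IVT_cor g 0 1 Hc ltac:(lra) ltac:(rewrite Hg0; lra)) as [l [_ Hl]].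
    assert (H := Hg2 l). rewrite Hl in H. lra.
Qed.




Lemma zero_gen (B : R) : is_RInt_gen (fun _ : R => 0) (at_point B) (Rbar_locally p_infty) 0.
Proof.
  apply filterlimi_locally. intro eps.
  exists (fun _ => True) (fun _ => True); try exact I.
  exists 0. intros; exact I.
  intros a b _ _. exists (scal (b - a) 0). split. apply (@is_RInt_const R_NormedModule).
  replace (scal (b - a) 0) with 0. apply ball_center. unfold scal; simpl; unfold mult; simpl; ring.
Qed.

Lemma int_trunc (G : R -> R) (B : R) : (forall t, B < t -> G t = 0) -> (forall t, continuous G t) ->
  int_0_infty G = RInt G 0 B.
Proof.
  intros HB HG. unfold int_0_infty.
  apply is_RInt_gen_unique.
  replace (RInt G 0 B) with (plus (RInt G 0 B) 0) by (unfold plus; simpl; ring).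
  apply (is_RInt_gen_Chasles (V := R_NormedModule)) with (b := B).
  - apply is_RInt_gen_at_point. apply (RInt_correct (V:=R_CompleteNormedModule)). apply ex_RInt_continuous. auto.
  - apply is_RInt_gen_ext with (fun _ => 0). 2: apply zero_gen.
    exists (fun a => a = B) (fun b => B < b).
    reflexivity. exists B; auto.
    intros a b Ha Hb t Ht. simpl in Ht. subst a. symmetry. apply HB.
    unfold Rmin in Ht; destruct (Rle_dec B b); lra.
Qed.

Lemma far_zero (g : vec2 -> R) (a : vec2) (r : R) : r < 1 -> (forall p, r < vnorm p -> g p = 0) ->
  fst a * fst a + snd a * snd a = 1 ->
  forall y t, 2 * (Rabs (fst y) + Rabs (snd y)) + 2 < t -> g (vadd y (vscal t a)) = 0.
Proof.
  intros Hr Hs Ha y t Ht. apply Hs.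
  destruct (abs_le1 _ _ Ha) as [A1 A2].
  assert (B1 : Rabs (fst y * fst a) <= Rabs (fst y)). { rewrite Rmult_comm, Rmult_comm. rewrite Rabs_mult. assert (0 <= Rabs (fst y)) by apply Rabs_pos. assert (0 <= Rabs (fst a)) by apply Rabs_pos. nra. }
  assert (B2 : Rabs (snd y * snd a) <= Rabs (snd y)). { rewrite Rabs_mult. assert (0 <= Rabs (snd y)) by apply Rabs_pos. assert (0 <= Rabs (snd a)) by apply Rabs_pos. nra. }
  assert (C1' : - Rabs (fst y * fst a) <= fst y * fst a) by (apply Ropp_le_cancel; rewrite Ropp_involutive; rewrite <- Rabs_Ropp; apply Rle_abs).
  assert (C2' : - Rabs (snd y * snd a) <= snd y * snd a) by (apply Ropp_le_cancel; rewrite Ropp_involutive; rewrite <- Rabs_Ropp; apply Rle_abs).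
  assert (0 <= Rabs (fst y)) by apply Rabs_pos. assert (0 <= Rabs (snd y)) by apply Rabs_pos.
  unfold vnorm, vdot, vadd, vscal; simpl.
  apply Rlt_trans with 1; auto. rewrite <- sqrt_1 at 1.
  apply sqrt_lt_1. lra. nra.
  set (K := Rabs (fst y) + Rabs (snd y)) in *.
  assert (E : (fst y + t * fst a) * (fst y + t * fst a) + (snd y + t * snd a) * (snd y + t * snd a)
     = fst y * fst y + snd y * snd y + 2 * t * (fst y * fst a + snd y * snd a) + t * t * (fst a * fst a + snd a * snd a)) by ring.
  rewrite E, Ha. assert (fst y * fst a + snd y * snd a >= - K) by (unfold K; lra). assert (0 <= K) by (unfold K; lra). assert (t - 2 * K > 2) by lra. assert (t > 2) by lra. assert (t * (t - 2 * K) > 1) by nra. assert (0 <= fst y * fst y + snd y * snd y) by nra. nra.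
Qed.

Lemma vanish (g : vec2 -> R) (a : vec2) (r : R) : (forall p, continuous g p) -> r < 1 ->
  (forall p, r < vnorm p -> g p = 0) -> fst a * fst a + snd a * snd a = 1 ->
  (forall x, int_0_infty (fun t => g (vadd x (vscal t a))) = 0) -> forall x, g x = 0.
Proof.
  intros Hg Hr Hs Ha H0 x.
  destruct (abs_le1 _ _ Ha) as [A1 A2].
  set (Gx := fun t => g (vadd x (vscal t a))).
  assert (HGc : forall t, continuous Gx t) by (intro t; apply (cont_line g Hg x a)).
  set (C := 2 * (Rabs (fst x) + Rabs (snd x)) + 8).
  assert (F0 : forall h, -1 < h < 1 -> RInt Gx h C = 0).
  { intros h Hh.
    set (y := vadd x (vscal h a)).
    assert (Hy1 : Rabs (fst y) <= Rabs (fst x) + 1).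
    { unfold y, vadd, vscal; simpl. eapply Rle_trans. apply Rabs_triang. rewrite Rabs_mult.
      assert (0 <= Rabs (fst a)) by apply Rabs_pos. assert (Rabs h <= 1) by (apply Rabs_le; lra). nra. }
    assert (Hy2 : Rabs (snd y) <= Rabs (snd x) + 1).
    { unfold y, vadd, vscal; simpl. eapply Rle_trans. apply Rabs_triang. rewrite Rabs_mult.
      assert (0 <= Rabs (snd a)) by apply Rabs_pos. assert (Rabs h <= 1) by (apply Rabs_le; lra). nra. }
    assert (Hext : forall t, g (vadd y (vscal t a)) = Gx (1 * t + h)).
    { intro t. unfold Gx, y, vadd, vscal; simpl. f_equal. apply injective_projections; simpl; ring. }
    assert (T := int_trunc (fun t => g (vadd y (vscal t a))) (C - h)).
    rewrite H0 in T. rewrite T.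
    - symmetry. rewrite (RInt_ext (fun t => g (vadd y (vscal t a))) (fun t => scal 1 (Gx (1 * t + h)))).
      rewrite (RInt_comp_lin (V:=R_CompleteNormedModule)).
      replace (1 * 0 + h) with h by ring. replace (1 * (C - h) + h) with C by ring. reflexivity.
      apply ex_RInt_continuous. intros; apply HGc.
      intros t _. rewrite Hext. unfold scal; simpl; unfold mult; simpl; ring.
    - intros t Ht. apply (far_zero g a r); auto. unfold C in Ht. lra.
    - intro t. apply (cont_line g Hg y a). }
  set (If := fun b => RInt Gx C b).
  assert (D1 : is_derive If 0 (Gx 0)).
  { apply (is_derive_RInt (V:=R_NormedModule) Gx If C 0).
    apply filter_forall. intro b. apply (RInt_correct (V:=R_CompleteNormedModule)).
    apply ex_RInt_continuous. intros; apply HGc.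
    apply HGc. }
  assert (D2 : is_derive If 0 0).
  { apply (is_derive_ext_loc (fun _ => 0)). 
    exists (mkposreal 1 Rlt_0_1). intros b Hb. unfold ball in Hb; simpl in Hb; unfold AbsRing_ball, abs, minus, plus, opp in Hb; simpl in Hb.
    unfold If. rewrite <- (opp_RInt_swap (V:=R_CompleteNormedModule)). rewrite F0. unfold opp; simpl; ring.
    apply Rabs_def2 in Hb. lra.
    apply ex_RInt_continuous. intros; apply HGc.
    apply (is_derive_const (K:=R_AbsRing) 0 0). }
  apply is_derive_unique in D1. apply is_derive_unique in D2. rewrite D1 in D2.
  unfold Gx in D2. replace (vadd x (vscal 0 a)) with x in D2. exact D2.
  unfold vadd, vscal; apply injective_projections; simpl; ring.
Qed.


Lemma cont_lin (al be : R) (g h : vec2 -> R) (p : vec2) :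
  continuous g p -> continuous h p -> continuous (fun p => al * g p + be * h p) p.
Proof.
  intros Hg Hh.
  apply (continuous_plus (V:=R_NormedModule) (fun p => al * g p) (fun p => be * h p)).
  apply (continuous_scal_r (V:=R_NormedModule) al g); auto.
  apply (continuous_scal_r (V:=R_NormedModule) be h); auto.
Qed.

Lemma d1_lin (al be : R) (g h : vec2 -> R) : C1 g -> C1 h ->
  d1 (fun p => al * g p + be * h p) = (fun p => al * d1 g p + be * d1 h p).
Proof.
  intros [Dg _] [Dh _]. apply functional_extensionality. intro p. unfold d1.
  rewrite Derive_plus. rewrite !Derive_scal. reflexivity.
  apply ex_derive_scal; apply Dg. apply ex_derive_scal; apply Dh.
Qed.

Lemma d2_lin (al be : R) (g h : vec2 -> R) : C1 g -> C1 h ->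
  d2 (fun p => al * g p + be * h p) = (fun p => al * d2 g p + be * d2 h p).
Proof.
  intros [Dg _] [Dh _]. apply functional_extensionality. intro p. unfold d2.
  rewrite Derive_plus. rewrite !Derive_scal. reflexivity.
  apply ex_derive_scal; apply Dg. apply ex_derive_scal; apply Dh.
Qed.

Lemma C1_lin (al be : R) (g h : vec2 -> R) : C1 g -> C1 h -> C1 (fun p => al * g p + be * h p).
Proof.
  intros Hg Hh.
  split.
  - intro p. destruct Hg as [Dg _]. destruct Hh as [Dh _]. split.
    + apply (ex_derive_plus (fun s => al * g (s, snd p)) (fun s => be * h (s, snd p))).
      apply ex_derive_scal; apply Dg. apply ex_derive_scal; apply Dh.
    + apply (ex_derive_plus (fun s => al * g (fst p, s)) (fun s => be * h (fst p, s))).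
      apply ex_derive_scal; apply Dg. apply ex_derive_scal; apply Dh.
  - intro p. rewrite (d1_lin al be g h Hg Hh), (d2_lin al be g h Hg Hh).
    destruct Hg as [_ Cg]. destruct Hh as [_ Ch].
    destruct (Cg p) as [? [? ?]]. destruct (Ch p) as [? [? ?]].
    split. apply cont_lin; auto. split; apply cont_lin; auto.
Qed.

Lemma C2_lin (al be : R) (g h : vec2 -> R) : C2 g -> C2 h -> C2 (fun p => al * g p + be * h p).
Proof.
  intros [Hg [Hg1 Hg2]] [Hh [Hh1 Hh2]].
  split. apply C1_lin; auto.
  rewrite (d1_lin al be g h Hg Hh), (d2_lin al be g h Hg Hh).
  split; apply C1_lin; auto.
Qed.

Lemma int_zero : int_0_infty (fun _ => 0) = 0.
Proof.
  rewrite (int_trunc (fun _ => 0) 0). apply (RInt_point (V:=R_CompleteNormedModule)).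
  intros; reflexivity. intros; apply continuous_const.
Qed.

Theorem theorem4p2 (u : vec2 -> vec2)
  (hu_C1 : C1v u)
  (hu_unit : forall x : vec2, vnorm (u x) = 1)
  (hu_lines : forall (x : vec2) (t : R), 0 <= t -> u (vadd x (vscal t (u x))) = u x)
  (f : vec2 -> vec2) (hf : Cc2v_D f) :
  ((forall x : vec2, L0 u f x = 0) <->
     exists phi : vec2 -> R, Cc2_D phi /\ forall x : vec2, f x = vscal (phi x) (vperp (u x)))
  /\
  ((forall x : vec2, T0 u f x = 0) <->
     exists phi : vec2 -> R, Cc2_D phi /\ forall x : vec2, f x = vscal (phi x) (u x)).
Proof.
  assert (Hconst : forall x, u x = u (0,0)) by (intro x; apply (uconst u hu_C1 hu_unit hu_lines)).
  assert (Ha := unit_sq _ (hu_unit (0,0))).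
  destruct (u (0,0)) as [a1 a2] eqn:Ea. simpl in Ha.
  destruct hf as [[Hf1 Hf2] [r [Hr Hsupp]]].
  set (f1 := fun p => fst (f p)). set (f2 := fun p => snd (f p)).
  assert (Cf : forall al be p, continuous (fun p => al * f1 p + be * f2 p) p).
  { intros al be p. destruct (C2_lin al be f1 f2 Hf1 Hf2) as [[_ C] _]. apply (proj1 (C p)). }
  assert (Sf : forall al be p, r < vnorm p -> al * f1 p + be * f2 p = 0).
  { intros al be p Hp. unfold f1, f2. rewrite (Hsupp p Hp). simpl. ring. }
  assert (Ha' : fst (a1, a2) * fst (a1, a2) + snd (a1, a2) * snd (a1, a2) = 1) by (simpl; exact Ha).
  split; split.
  - intro H.
    assert (Z : forall x, a1 * f1 x + a2 * f2 x = 0).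
    { apply (vanish (fun p => a1 * f1 p + a2 * f2 p) (a1, a2) r); auto.
      intro x. assert (Hx := H x). unfold L0 in Hx. rewrite (Hconst x) in Hx.
      unfold vdot in Hx. simpl in Hx. unfold f1, f2. lra. }
    exists (fun p => (- a2) * f1 p + a1 * f2 p). split.
    + split. apply C2_lin; auto. exists r. split. exact Hr. intros p Hp. apply Sf; auto.
    + intro x. rewrite (Hconst x). unfold vscal, vperp; simpl.
      assert (Zx := Z x). unfold f1, f2 in *. destruct (f x) as [y1 y2]; simpl in *.
      apply injective_projections; simpl.
      * apply Rminus_diag_uniq. replace (y1 - (- a2 * y1 + a1 * y2) * - a2) with (a1 * (a1 * y1 + a2 * y2) + y1 * (1 - (a1 * a1 + a2 * a2))) by ring.
        rewrite Zx, Ha. ring.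
      * apply Rminus_diag_uniq. replace (y2 - (- a2 * y1 + a1 * y2) * a1) with (a2 * (a1 * y1 + a2 * y2) + y2 * (1 - (a1 * a1 + a2 * a2))) by ring.
        rewrite Zx, Ha. ring.
  - intros [phi [_ Hphi]] x. unfold L0. rewrite (Hconst x).
    replace (fun t => vdot (a1, a2) (f (vadd x (vscal t (a1, a2))))) with (fun _ : R => 0).
    rewrite int_zero. ring.
    apply functional_extensionality. intro t. rewrite Hphi, Hconst. unfold vdot, vscal, vperp; simpl. ring.
  - intro H.
    assert (Z : forall x, (- a2) * f1 x + a1 * f2 x = 0).
    { apply (vanish (fun p => (- a2) * f1 p + a1 * f2 p) (a1, a2) r); auto.
      intro x. assert (Hx := H x). unfold T0 in Hx. rewrite (Hconst x) in Hx.
      unfold vdot, vperp in Hx. simpl in Hx. unfold f1, f2. lra. }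
    exists (fun p => a1 * f1 p + a2 * f2 p). split.
    + split. apply C2_lin; auto. exists r. split. exact Hr. intros p Hp. apply Sf; auto.
    + intro x. rewrite (Hconst x). unfold vscal; simpl.
      assert (Zx := Z x). unfold f1, f2 in *. destruct (f x) as [y1 y2]; simpl in *.
      apply injective_projections; simpl.
      * apply Rminus_diag_uniq. replace (y1 - (a1 * y1 + a2 * y2) * a1) with (- a2 * (- a2 * y1 + a1 * y2) + y1 * (1 - (a1 * a1 + a2 * a2))) by ring.
        rewrite Zx, Ha. ring.
      * apply Rminus_diag_uniq. replace (y2 - (a1 * y1 + a2 * y2) * a2) with (a1 * (- a2 * y1 + a1 * y2) + y2 * (1 - (a1 * a1 + a2 * a2))) by ring.
        rewrite Zx, Ha. ring.
  - intros [phi [_ Hphi]] x. unfold T0. rewrite (Hconst x).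
    replace (fun t => vdot (vperp (a1, a2)) (f (vadd x (vscal t (a1, a2))))) with (fun _ : R => 0).
    rewrite int_zero. ring.
    apply functional_extensionality. intro t. rewrite Hphi, Hconst. unfold vdot, vscal, vperp; simpl. ring.
Qed.
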